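(* Let $a,b\ge1$ be integers with $|a-b|>4$, and let $n=a+b+2$. Then $\operatorname{diam}(\mathcal{C}_3(S(a,b)))>\lfloor 3n/2\rfloor$.
   Context: The double star $S(a,b)$ is the tree obtained by joining the centers of the stars $K_{1,a}$ and $K_{1,b}$ by an edge; it has $a+b+2$ vertices. A proper 3-coloring of a tree $T=(V,E)$ is a map $f\colon V\to\mathbb{Z}/3\mathbb{Z}$ with $f(u)\neq f(v)$ for every edge $uv\in E$. The 3-coloring graph $\mathcal{C}_3(T)$ has the proper 3-colorings as vertices, two colorings adjacent iff they differ at exactly one vertex; $\operatorname{diam}$ denotes graph diameter. *)

(* Defs.v *)
From mathcomp Require Import all_boot all_order all_algebra.
Set Implicit Arguments. Unset Strict Implicit. Unset Printing Implicit Defensive.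

(* Double star S(a,b) on the vertex set 'I_(a+b+2):
   vertex 0 = centre of K_{1,a}, vertex 1 = centre of K_{1,b},
   vertices 2 .. a+1 = leaves of the first star,
   vertices a+2 .. a+b+1 = leaves of the second star. *)
Definition ds_adj (a : nat) (x y : nat) : bool :=
  [|| (x == 0) && (y == 1),
      (x == 0) && (2 <= y < a + 2)
    | (x == 1) && (a + 2 <= y)].

Definition double_star_edge (a b : nat) : rel 'I_(a + b + 2) :=
  fun u v => ds_adj a u v || ds_adj a v u.
Arguments double_star_edge : clear implicits.

Definition coloring (T : finType) := {ffun T -> 'Z_3}.

Definition proper_coloring (T : finType) (E : rel T) (f : coloring T) : bool :=
  [forall u, forall v, E u v ==> (f u != f v)].

Definition C3_adj (T : finType) (E : rel T) : rel (coloring T) :=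
  fun f g => [&& proper_coloring E f, proper_coloring E g
              & #|[set x | f x != g x]| == 1].

Definition C3_within (T : finType) (E : rel T) (k : nat) (f g : coloring T) : Prop :=
  exists s : seq (coloring T),
    [/\ size s <= k, path (C3_adj E) f s & last f s = g].

(* diam(C_3(T)) > m  :<=>  some pair of vertices of C_3(T) (proper colourings)
   is at distance > m (distance = +oo if no walk exists). *)
Definition C3_diam_gt (T : finType) (E : rel T) (m : nat) : Prop :=
  exists f g : coloring T,
    [/\ proper_coloring E f, proper_coloring E g & ~ C3_within E m f g].

(* Main.v *)
Require Import Defs.
From mathcomp Require Import all_boot all_order all_algebra.
From mathcomp Require Import zify.
Set Implicit Arguments. Unset Strict Implicit. Unset Printing Implicit Defensive.

Definition k0 : 'Z_3 := @Ordinal 3 0 isT.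
Definition k1 : 'Z_3 := @Ordinal 3 1 isT.
Definition k2 : 'Z_3 := @Ordinal 3 2 isT.
Lemma Z3cases (c : 'Z_3) : [\/ c = k0, c = k1 | c = k2].
Proof. case: c => [[|[|[|?]]] H]; try (by [constructor; apply/val_inj]); by []. Qed.

Lemma third (c d w e : 'Z_3) : c != d -> w != c -> w != d -> e != c -> e != d -> w = e.
Proof.
by case: (Z3cases c) => ->; case: (Z3cases d) => ->; case: (Z3cases w) => ->;
   case: (Z3cases e) => ->.
Qed.

Lemma first_exit (Q : nat -> bool) i j : i <= j -> Q i -> ~~ Q j ->
  exists k, [/\ i <= k, k < j, (forall l, i <= l <= k -> Q l) & ~~ Q k.+1].
Proof.
move=> ij Qi Qj.
have ex : exists n, (i <= n <= j) && ~~ Q n by exists j; rewrite ij leqnn.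
case: (ex_minnP ex) => n /andP[/andP[i_n nj] Qn] hmin.
case: n i_n nj Qn hmin => [|k] i_n nj Qn hmin.
  by move: i_n; rewrite leqn0 => /eqP Ei; move: Qi; rewrite Ei (negbTE Qn).
have ik : i <= k.
  rewrite leq_eqVlt in i_n; case/orP: i_n => [/eqP Ei|//].
  by move: Qi; rewrite Ei (negbTE Qn).
exists k; split => //.
move=> l /andP[il lk]; apply/negPn/negP => Ql.
have := hmin l; rewrite il Ql /= (leq_trans lk) ?leqnn //; last by apply: ltnW.
move=> /(_ isT); lia.
Qed.

Lemma last_entry (Q : nat -> bool) i j : i <= j -> ~~ Q i -> Q j ->
  exists k, [/\ i <= k, k < j, ~~ Q k & forall l, k < l <= j -> Q l].
Proof.
move=> ij Qi Qj.
have ex : exists n, (i <= n <= j) && ~~ Q n by exists i; rewrite leqnn ij.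
have ub : forall n, (i <= n <= j) && ~~ Q n -> n <= j by move=> n /andP[/andP[]].
case: (ex_maxnP ex ub) => n /andP[/andP[i_n nj] Qn] hmax.
exists n; split => //.
  rewrite ltn_neqAle nj andbT; apply/eqP => E; by move: Qj; rewrite -E (negbTE Qn).
move=> l /andP[nl lj]; apply/negPn/negP => Ql.
have := hmax l; rewrite lj Ql (leq_trans i_n (ltnW nl)) /= => /(_ isT); lia.
Qed.

Section Walk.
Variables (T : finType) (E : rel T) (p : nat -> coloring T) (m : nat).
Hypothesis hstep : forall k, k < m -> C3_adj E (p k) (p k.+1).

Definition cnt v i j := \sum_(i <= k < j) (p k v != p k.+1 v).

Lemma cnt_split v i j k : i <= j -> j <= k -> cnt v i k = cnt v i j + cnt v j k.
Proof. by move=> ij jk; rewrite /cnt (@big_cat_nat _ _ _ j i k). Qed.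

Lemma cnt_ge v i j : i <= j -> (p i v != p j v) <= cnt v i j.
Proof.
elim: j => [|j IH]; first by rewrite leqn0 => /eqP->; rewrite eqxx.
rewrite leq_eqVlt => /orP[/eqP->|ij]; first by rewrite eqxx.
rewrite (@cnt_split v i j j.+1) // ?(ltnW ij) //.
rewrite /cnt big_nat1 -/(cnt v i j).
have := IH ij; case: (p i v =P p j v) => [->|_] /=.
  by move=> _; exact: leq_addl.
by move=> h; apply: leq_trans (leq_b1 _) _; apply: leq_trans h (leq_addr _ _).
Qed.

Lemma cnt_ge2 v i j l : i <= j -> j <= l ->
  (p i v != p j v) + (p j v != p l v) <= cnt v i l.
Proof.
move=> ij jl; rewrite (cnt_split v ij jl); apply: leq_add; exact: cnt_ge.
Qed.

Lemma step_other k v w : k < m -> p k v != p k.+1 v -> w != v -> p k w = p k.+1 w.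
Proof.
move=> km hv wv; have /and3P[_ _ /cards1P[z hz]] := hstep km.
have : v \in [set x | p k x != p k.+1 x] by rewrite inE.
rewrite hz inE => /eqP Evz.
apply/eqP; apply: contraNT wv => hw.
have : w \in [set x | p k x != p k.+1 x] by rewrite inE.
by rewrite hz inE Evz.
Qed.

Lemma proper_step k u v : k < m -> E u v -> (p k u != p k v) && (p k.+1 u != p k.+1 v).
Proof.
move=> km euv; have /and3P[h1 h2 _] := hstep km.
move: h1 h2 => /forallP/(_ u)/forallP/(_ v)/implyP/(_ euv) ->
               /forallP/(_ u)/forallP/(_ v)/implyP/(_ euv) ->.
done.
Qed.

Lemma nbr_col k v w e : k < m -> p k v != p k.+1 v -> E v w ->
  e != p k v -> e != p k.+1 v -> p k w = e.
Proof.
move=> km hv evw e1 e2.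
have /andP[h1 h2] := proper_step km evw.
have wv : w != v by apply: contraNneq h1 => ->.
have ow := step_other km hv wv.
apply: (third hv) => //; first by rewrite eq_sym.
by rewrite ow eq_sym.
Qed.

Lemma sum_cnt : \sum_v cnt v 0 m = m.
Proof.
rewrite /cnt exchange_big /=.
rewrite -[m in RHS]subn0 -[m - 0]muln1 -sum_nat_const_nat.
apply: eq_big_nat => k /andP[_ km].
have /and3P[_ _ /eqP hc] := hstep km.
apply: etrans hc; rewrite -sum1_card.
rewrite [RHS]big_mkcond /=; apply: eq_bigr => v _; rewrite inE; by case: (_ != _).
Qed.

Lemma cnt_ge3 v t0 t1 t2 t3 : t0 <= t1 -> t1 <= t2 -> t2 <= t3 ->
  (p t0 v != p t1 v) + (p t1 v != p t2 v) + (p t2 v != p t3 v) <= cnt v t0 t3.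
Proof.
move=> h1 h2 h3; rewrite (cnt_split v (leq_trans h1 h2) h3).
apply: leq_add; [exact: cnt_ge2|exact: cnt_ge].
Qed.

Lemma cnt_ge4 v t0 t1 t2 t3 t4 : t0 <= t1 -> t1 <= t2 -> t2 <= t3 -> t3 <= t4 ->
  (p t0 v != p t1 v) + (p t1 v != p t2 v) + (p t2 v != p t3 v) + (p t3 v != p t4 v)
  <= cnt v t0 t4.
Proof.
move=> h1 h2 h3 h4; rewrite (cnt_split v (leq_trans h1 (leq_trans h2 h3)) h4).
apply: leq_add; [exact: cnt_ge3|exact: cnt_ge].
Qed.

Lemma stepL v i k j : i <= k -> k < j -> p k v != p k.+1 v -> cnt v i k + 1 <= cnt v i j.
Proof.
move=> ik kj c; rewrite (cnt_split v ik (ltnW kj)) leq_add2l.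
by have := cnt_ge v (leqnSn k); rewrite c (cnt_split v (leqnSn k) kj); lia.
Qed.

End Walk.




Lemma ar1 a b N m : N <= 2 * a + b -> a + b <= N ->
  1 + 0 + 1 * a + 1 * (a - (2 * a + b - N)) + 1 * b <= m -> N < m.
Proof. lia. Qed.
Lemma ar2 a b N m : 2 * N <= 3 * a + 3 * b + 6 -> 1 <= b ->
  2 + 3 + 1 * a + 1 * (2 * a + b - N) + 4 * b <= m -> N < m.
Proof. lia. Qed.
Lemma ar3 a b N m : 2 * N <= 3 * a + 3 * b + 6 -> 1 <= b ->
  2 + 4 + 1 * a + 1 * (2 * a + b - N) + 3 * b <= m -> N < m.
Proof. lia. Qed.
Lemma ch2 u v w : u + 1 <= v -> v + 1 <= w -> 2 <= w. Proof. lia. Qed.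
Lemma ch3 u v w z : u + 1 <= v -> v + 1 <= w -> w + 1 <= z -> 3 <= z. Proof. lia. Qed.
Lemma ch4 u v w z t : u + 1 <= v -> v + 1 <= w -> w + 1 <= z -> z + 1 <= t -> 4 <= t.
Proof. lia. Qed.

Section Abs.
Variables (T : finType) (E : rel T) (x y : T) (A B U : {set T}) (a b N : nat).
Hypotheses (hxy : x != y) (hxA : x \notin A) (hxB : x \notin B)
  (hyA : y \notin A) (hyB : y \notin B)
  (hAB : forall v, v \in A -> v \notin B) (hUA : U \subset A)
  (hExy : E x y) (hEA : forall w, w \in A -> E x w) (hEB : forall w, w \in B -> E y w)
  (hE : forall u v, E u v ->
     [|| (u == x) && ((v == y) || (v \in A)), (v == x) && ((u == y) || (u \in A)),
         (u == y) && (v \in B) | (v == y) && (u \in B)])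
  (cA : #|A| = a) (cB : #|B| = b) (cU : #|U| = 2 * a + b - N)
  (hb : 1 <= b) (hN1 : 2 * N <= 3 * a + 3 * b + 6) (hN2 : N <= 2 * a + b)
  (hN3 : a + b <= N).

Lemma Ax v : v \in A -> v != x. Proof. by move=> h; apply: contraNneq hxA => <-. Qed.
Lemma Ay v : v \in A -> v != y. Proof. by move=> h; apply: contraNneq hyA => <-. Qed.
Lemma Bx v : v \in B -> v != x. Proof. by move=> h; apply: contraNneq hxB => <-. Qed.
Lemma By v : v \in B -> v != y. Proof. by move=> h; apply: contraNneq hyB => <-. Qed.
Lemma UA v : v \in U -> v \in A. Proof. exact: (subsetP hUA). Qed.
Lemma BU v : v \in B -> v \notin U.
Proof. move=> h; apply/negP => /UA hA; by move: (hAB hA); rewrite h. Qed.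
Lemma hyx : y != x. Proof. by rewrite eq_sym. Qed.

Definition fc : coloring T := [ffun v => if v == x then k0 else if v == y then k1 else k2].
Definition gc : coloring T :=
  [ffun v => if v == x then k2 else if v == y then k1 else if v \in U then k1 else k0].

Lemma fcx : fc x = k0. Proof. by rewrite ffunE eqxx. Qed.
Lemma fcy : fc y = k1. Proof. by rewrite ffunE (negbTE hyx) eqxx. Qed.
Lemma fco v : v != x -> v != y -> fc v = k2.
Proof. by move=> h1 h2; rewrite ffunE (negbTE h1) (negbTE h2). Qed.
Lemma gcx : gc x = k2. Proof. by rewrite ffunE eqxx. Qed.
Lemma gcy : gc y = k1. Proof. by rewrite ffunE (negbTE hyx) eqxx. Qed.
Lemma gco v : v != x -> v != y -> gc v = if v \in U then k1 else k0.
Proof. by move=> h1 h2; rewrite ffunE (negbTE h1) (negbTE h2). Qed.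

Lemma fc_proper : proper_coloring E fc.
Proof.
apply/forallP=> u; apply/forallP=> v; apply/implyP=> /hE.
case/or4P=> /andP[/eqP-> h].
- case/orP: h => [/eqP->|h]; first by rewrite fcx fcy.
  by rewrite fcx fco ?Ax ?Ay.
- case/orP: h => [/eqP->|h]; first by rewrite fcx fcy.
  by rewrite fcx fco ?Ax ?Ay.
- by rewrite fcy fco ?Bx ?By.
- by rewrite fcy fco ?Bx ?By.
Qed.

Lemma gc_proper : proper_coloring E gc.
Proof.
apply/forallP=> u; apply/forallP=> v; apply/implyP=> /hE.
case/or4P=> /andP[/eqP-> h].
- case/orP: h => [/eqP->|h]; first by rewrite gcx gcy.
  by rewrite gcx gco ?Ax ?Ay //; case: (_ \in U).
- case/orP: h => [/eqP->|h]; first by rewrite gcx gcy.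
  by rewrite gcx gco ?Ax ?Ay //; case: (_ \in U).
- by rewrite gcy gco ?Bx ?By // (negbTE (BU h)).
- by rewrite gcy gco ?Bx ?By // (negbTE (BU h)).
Qed.

Lemma sum_ind (S : {set T}) : \sum_v ((v \in S) : nat) = #|S|.
Proof.
rewrite -sum1_card [RHS]big_mkcond /=; apply: eq_bigr => v _; by case: (v \in S).
Qed.

Lemma sum_eq (z : T) : \sum_v ((v == z) : nat) = 1.
Proof.
rewrite -(cards1 z) -sum_ind; apply: eq_bigr => v _; by rewrite inE.
Qed.

Lemma final_sum (F : T -> nat) (S : {set T}) kx ky kA kS kB :
  S \subset A ->
  (forall v, v == x -> kx <= F v) -> (forall v, v == y -> ky <= F v) ->
  (forall v, v \in A -> kA + kS * (v \in S) <= F v) -> (forall v, v \in B -> kB <= F v) ->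
  kx + ky + kA * a + kS * #|S| + kB * b <= \sum_v F v.
Proof.
move=> hSA Fx Fy FA FB.
have -> : kx + ky + kA * a + kS * #|S| + kB * b =
  \sum_v (kx * (v == x) + ky * (v == y) + kA * (v \in A) + kS * (v \in S) + kB * (v \in B)).
  rewrite !big_split /= -!big_distrr /= !sum_ind !sum_eq cA cB; lia.
apply: leq_sum => v _.
case: (boolP (v == x)) => vx.
  have vA : v \notin A by rewrite (eqP vx).
  have vS : v \notin S by apply: contra vA; apply: (subsetP hSA).
  rewrite (eqP vx) (negbTE hxy) (negbTE hxA) (negbTE hxB) -(eqP vx) (negbTE vS) /=.
  by rewrite !muln0 muln1 !addn0; apply: Fx.
case: (boolP (v == y)) => vy.
  have vA : v \notin A by rewrite (eqP vy).
  have vS : v \notin S by apply: contra vA; apply: (subsetP hSA).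
  rewrite (eqP vy) (negbTE hyA) (negbTE hyB) -(eqP vy) (negbTE vS) /=.
  by rewrite !muln0 muln1 !addn0; apply: Fy.
case: (boolP (v \in A)) => vA.
  rewrite (negbTE (hAB vA)) /= !muln0 muln1 !add0n addn0.
  exact: FA.
have vS : v \notin S by apply: contra vA; apply: (subsetP hSA).
rewrite (negbTE vS) /= !muln0 !add0n.
case: (boolP (v \in B)) => vB; last by rewrite muln0.
by rewrite muln1; apply: FB.
Qed.

Lemma lower (p : nat -> coloring T) m :
  (forall k, k < m -> C3_adj E (p k) (p k.+1)) -> p 0 = fc -> p m = gc -> N < m.
Proof.
move=> hstep p0 pm.
have sumc := sum_cnt hstep.
have hyx' := hyx.
case: (boolP [exists k : 'I_m, [&& p k x != p k.+1 x, p k x != k1 & p k.+1 x != k1]]).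
  case/existsP=> [[k km]] /= /and3P[c h1 h2].
  have nk w : w \in A -> p k w = k1.
    by move=> wA; apply: (nbr_col hstep km c (hEA wA)); rewrite eq_sym.
  have := @final_sum (fun v => cnt p v 0 m) (A :\: U) 1 0 1 1 1 (subsetDl A U).
  rewrite sumc.
  have cAU : #|A :\: U| = a - #|U| by rewrite cardsD (setIidPr hUA) cA.
  rewrite cAU cU => H.
  apply: (ar1 hN2 hN3); apply: H.
  - move=> v /eqP ->; have := cnt_ge p x (leq0n m); by rewrite p0 pm fcx gcx.
  - by [].
  - move=> v vA; have := cnt_ge2 p v (leq0n k) (ltnW km).
    rewrite p0 pm nk // fco ?Ax ?Ay // gco ?Ax ?Ay // !inE vA andbT.
    by case: (v \in U).
  - move=> v vB; have := cnt_ge p v (leq0n m).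
    by rewrite p0 pm fco ?Bx ?By // gco ?Bx ?By // (negbTE (BU vB)).
move=> /existsPn hno.
have hchg k : k < m -> p k x != p k.+1 x -> (p k x == k1) || (p k.+1 x == k1).
  move=> km c; move: (hno (Ordinal km)) => /=; rewrite c /= negb_and !negbK //.
have [T1 [_ T1m h0 hT1]] := @first_exit (fun l => p l x == k0) 0 m (leq0n m)
   ltac:(by rewrite /= p0 fcx) ltac:(by rewrite /= pm gcx).
have xT1 : p T1 x = k0 by apply/eqP; apply: h0; rewrite leqnn.
have c1 : p T1 x != p T1.+1 x by rewrite xT1 eq_sym.
have xT1' : p T1.+1 x = k1.
  by move: (hchg T1 T1m c1); rewrite xT1 /= => /eqP.
have [T2 [T12 T2m hT2 h2]] := @last_entry (fun l => p l x == k2) T1.+1 m T1m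
   ltac:(by rewrite /= xT1') ltac:(by rewrite /= pm gcx).
have xT2' : p T2.+1 x = k2 by apply/eqP; apply: h2; rewrite leqnn T2m.
have c2 : p T2 x != p T2.+1 x by rewrite xT2'.
have xT2 : p T2 x = k1.
  by move: (hchg T2 T2m c2); rewrite xT2' orbF => /eqP.
have nT1 w : E x w -> p T1 w = k2.
  by move=> ew; apply: (nbr_col hstep T1m c1 ew); rewrite ?xT1 ?xT1'.
have nT2 w : E x w -> p T2 w = k0.
  by move=> ew; apply: (nbr_col hstep T2m c2 ew); rewrite ?xT2 ?xT2'.
have yT1 := nT1 _ hExy.
have yT2 := nT2 _ hExy.
have [P [_ PT1 hP hP']] := @first_exit (fun l => p l y == k1) 0 T1 (leq0n _)
   ltac:(by rewrite /= p0 fcy) ltac:(by rewrite /= yT1).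
have yP : p P y = k1 by apply/eqP; apply: hP; rewrite leqnn.
have Pm : P < m by apply: ltn_trans T1m.
have xP1 : p P.+1 x = k0 by apply/eqP; apply: h0; rewrite PT1.
have yP1 : p P.+1 y = k2.
  have /andP[_ pr] := proper_step hstep Pm hExy.
  apply: (@third k0 k1) => //; by rewrite eq_sym -?xP1.
have cP : p P y != p P.+1 y by rewrite yP yP1.
have nP w : w \in B -> p P w = k0.
  by move=> wB; apply: (nbr_col hstep Pm cP (hEB wB)); rewrite ?yP ?yP1.
have yT2' : p T2.+1 y = k0 by rewrite -(step_other hstep T2m c2 hyx').
have [Q [T2Q Qm hQ hQ']] := @last_entry (fun l => p l y == k1) T2.+1 m T2m
   ltac:(by rewrite /= yT2') ltac:(by rewrite /= pm gcy).
have yQ1 : p Q.+1 y = k1 by apply/eqP; apply: hQ'; rewrite leqnn Qm.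
have xQ : p Q x = k2 by apply/eqP; apply: h2; rewrite T2Q /= ltnW.
have yQ : p Q y = k0.
  have /andP[pr _] := proper_step hstep Qm hExy.
  apply: (@third k1 k2) => //; by rewrite ?(eq_sym _ k2) -?xQ // eq_sym.
have cQ : p Q y != p Q.+1 y by rewrite yQ yQ1.
have nQ w : w \in B -> p Q w = k2.
  by move=> wB; apply: (nbr_col hstep Qm cQ (hEB wB)); rewrite ?yQ ?yQ1.
have [R [T1R RT2 hR hR']] := @first_exit (fun l => p l y == k2) T1 T2 (ltnW T12)
   ltac:(by rewrite /= yT1) ltac:(by rewrite /= yT2).
have yR : p R y = k2 by apply/eqP; apply: hR; rewrite leqnn T1R.
have Rm : R < m by apply: ltn_trans T2m.
have cR : p R y != p R.+1 y by rewrite yR eq_sym.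
have PR : P < R by apply: leq_trans T1R.
have RQ : R < Q by apply: ltn_trans T2Q; apply: leq_trans RT2 _.
have bx : 2 <= cnt p x 0 m.
  have hh1 := stepL (leq0n T2) T2m c2.
  have hh2 := stepL (leq0n T1) T12 c1.
  exact: ch2 hh2 hh1.
have bA v : v \in A -> 1 + 1 * (v \in U) <= cnt p v 0 m.
  move=> vA; have := cnt_ge3 p v (leq0n T1) (ltnW T12) (ltnW T2m).
  rewrite p0 pm nT1 ?hEA // nT2 ?hEA // fco ?Ax ?Ay // gco ?Ax ?Ay //.
  by case: (v \in U).
have := @final_sum (fun v => cnt p v 0 m) U 2 _ 1 1 _ hUA.
rewrite sumc cU => H.
case: (Z3cases (p R.+1 y)) => yR1; last by move: hR'; rewrite yR1.
- (* y: 2 -> 0 at R ; B leaves colour k1 at R *)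
  have nR w : w \in B -> p R w = k1.
    by move=> wB; apply: (nbr_col hstep Rm cR (hEB wB)); rewrite ?yR ?yR1.
  apply: (ar2 hN1 hb); apply: H => //.
  - by move=> v /eqP ->.
  - move=> v /eqP ->.
    have hh1 := stepL (p:=p) (v:=y) (leq0n _) Qm cQ.
    have hh2 := stepL (p:=p) (v:=y) (leq0n _) RQ cR.
    have hh3 := stepL (p:=p) (v:=y) (leq0n _) PR cP. exact: ch3 hh3 hh2 hh1.
  - move=> v vB.
    have := cnt_ge4 p v (leq0n P) (ltnW PR) (ltnW RQ) (ltnW Qm).
    by rewrite p0 pm nP // nR // nQ // fco ?Bx ?By // gco ?Bx ?By // (negbTE (BU vB)).
- (* y: 2 -> 1 at R, then leaves 1 again before T2 *)
  have [R' [RR' R'T2 hR1 hR1']] := @first_exit (fun l => p l y == k1) R.+1 T2 RT2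
     ltac:(by rewrite /= yR1) ltac:(by rewrite /= yT2).
  have yR' : p R' y = k1 by apply/eqP; apply: hR1; rewrite leqnn RR'.
  have cR' : p R' y != p R'.+1 y by rewrite yR' eq_sym.
  have R'Q : R' < Q by apply: ltn_trans T2Q; apply: leq_trans R'T2 _.
  have RR'' : R < R' by [].
  apply: (ar3 hN1 hb); apply: H => //.
  - by move=> v /eqP ->.
  - move=> v /eqP ->.
    have hh1 := stepL (p:=p) (v:=y) (leq0n _) Qm cQ.
    have hh2 := stepL (p:=p) (v:=y) (leq0n _) R'Q cR'.
    have hh3 := stepL (p:=p) (v:=y) (leq0n _) RR'' cR.
    have hh4 := stepL (p:=p) (v:=y) (leq0n _) PR cP. exact: ch4 hh4 hh3 hh2 hh1.
  - move=> v vB.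
    have := cnt_ge3 p v (leq0n P) (ltnW (ltn_trans PR RQ)) (ltnW Qm).
    by rewrite p0 pm nP // nQ // fco ?Bx ?By // gco ?Bx ?By // (negbTE (BU vB)).
Qed.

End Abs.



Lemma main_abs (T : finType) (E : rel T) (x y : T) (A B U : {set T}) (a b N : nat) :
  x != y -> x \notin A -> x \notin B -> y \notin A -> y \notin B ->
  (forall v, v \in A -> v \notin B) -> U \subset A ->
  E x y -> (forall w, w \in A -> E x w) -> (forall w, w \in B -> E y w) ->
  (forall u v, E u v ->
     [|| (u == x) && ((v == y) || (v \in A)), (v == x) && ((u == y) || (u \in A)),
         (u == y) && (v \in B) | (v == y) && (u \in B)]) ->
  #|A| = a -> #|B| = b -> #|U| = 2 * a + b - N ->
  1 <= b -> 2 * N <= 3 * a + 3 * b + 6 -> N <= 2 * a + b -> a + b <= N ->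
  C3_diam_gt E N.
Proof.
move=> hxy hxA hxB hyA hyB hAB hUA hExy hEA hEB hE cA cB cU hb hN1 hN2 hN3.
exists (fc x y), (gc x y U); split.
- exact: fc_proper hxy hxA hxB hyA hyB hE.
- exact: gc_proper hxy hxA hxB hyA hyB hAB hUA hE.
case=> s [hs hpath hlast].
have hstep : forall k, k < size s ->
    C3_adj E (nth (fc x y) (fc x y :: s) k) (nth (fc x y) (fc x y :: s) k.+1).
  by move=> k km; exact: (pathP (fc x y) hpath k km).
have := lower hxy hxA hxB hyA hyB hAB hUA hExy hEA hEB cA cB cU hb hN1 hN2 hN3 hstep erefl.
have hX : nth (fc x y) (fc x y :: s) (size s) = gc x y U.
  by rewrite -hlast -[size s]/((size (fc x y :: s)).-1) nth_last.
by rewrite ltnNge hs => /(_ hX).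
Qed.


Definition Iset n lo hi : {set 'I_n} := [set v : 'I_n | lo <= v < hi].

Lemma count_int lo hi n : lo <= hi -> hi <= n ->
  count (fun i => lo <= i < hi) (iota 0 n) = hi - lo.
Proof.
move=> lh hn.
have -> : n = lo + (hi - lo) + (n - hi) by lia.
rewrite !iotaD !count_cat add0n.
have -> : count (fun i => lo <= i < hi) (iota 0 lo) = 0.
  apply/eqP; rewrite eqn0Ngt -has_count; apply/hasPn => i; rewrite mem_iota; lia.
have -> : count (fun i => lo <= i < hi) (iota (lo + (hi - lo)) (n - hi)) = 0.
  apply/eqP; rewrite eqn0Ngt -has_count; apply/hasPn => i; rewrite mem_iota; lia.
rewrite (@eq_in_count _ _ predT) ?count_predT ?size_iota ?addn0 //.
move=> i; rewrite mem_iota /=; lia.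
Qed.

Lemma card_Iset n lo hi : lo <= hi -> hi <= n -> #|Iset n lo hi| = hi - lo.
Proof.
move=> lh hn; rewrite -sum1_card.
rewrite (eq_bigl (fun i : 'I_n => lo <= i < hi)); last by move=> i; rewrite inE.
rewrite -(big_mkord (fun i => lo <= i < hi) (fun _ => 1)) sum1_count /index_iota subn0.
exact: count_int.
Qed.


Lemma case1 (a b : nat) : 1 <= b -> b + 4 < a ->
  C3_diam_gt (double_star_edge a b) ((3 * (a + b + 2)) %/ 2).
Proof.
move=> hb hab.
set N := (3 * (a + b + 2)) %/ 2.
have hN : N * 2 <= 3 * (a + b + 2) < N * 2 + 2.
  by rewrite /N; move: (divn_eq (3 * (a + b + 2)) 2) (ltn_pmod (3 * (a + b + 2)) (isT : 0 < 2)); lia.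
have h0 : 0 < a + b + 2 by lia.
have h1 : 1 < a + b + 2 by lia.
apply: (@main_abs _ _ (Ordinal h0) (Ordinal h1)
   (Iset (a + b + 2) 2 (a + 2)) (Iset (a + b + 2) (a + 2) (a + b + 2))
   (Iset (a + b + 2) 2 (2 + (2 * a + b - N))) a b N).
all: try (by rewrite -?val_eqE ?inE /=; lia).
- by move=> v; rewrite !inE; lia.
- by apply/subsetP => v; rewrite !inE; lia.
- by rewrite /double_star_edge /ds_adj /=; lia.
- by move=> w; rewrite !inE /double_star_edge /ds_adj /=; lia.
- by move=> w; rewrite !inE /double_star_edge /ds_adj /=; lia.
- move=> u v; rewrite /double_star_edge /ds_adj -!val_eqE !inE /=.
  move: (ltn_ord u) (ltn_ord v); lia.
- by rewrite card_Iset; lia.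
- by rewrite card_Iset; lia.
- by rewrite card_Iset; lia.
Qed.

Lemma case2 (a b : nat) : 1 <= a -> a + 4 < b ->
  C3_diam_gt (double_star_edge a b) ((3 * (a + b + 2)) %/ 2).
Proof.
move=> ha hab.
set N := (3 * (a + b + 2)) %/ 2.
have hN : N * 2 <= 3 * (a + b + 2) < N * 2 + 2.
  by rewrite /N; move: (divn_eq (3 * (a + b + 2)) 2) (ltn_pmod (3 * (a + b + 2)) (isT : 0 < 2)); lia.
have h0 : 0 < a + b + 2 by lia.
have h1 : 1 < a + b + 2 by lia.
apply: (@main_abs _ _ (Ordinal h1) (Ordinal h0)
   (Iset (a + b + 2) (a + 2) (a + b + 2)) (Iset (a + b + 2) 2 (a + 2))
   (Iset (a + b + 2) (a + 2) (a + 2 + (2 * b + a - N))) b a N).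
all: try (by rewrite -?val_eqE ?inE /=; lia).
- by move=> v; rewrite !inE; lia.
- by apply/subsetP => v; rewrite !inE; lia.
- by rewrite /double_star_edge /ds_adj /=; lia.
- by move=> w; rewrite !inE /double_star_edge /ds_adj /=; lia.
- by move=> w; rewrite !inE /double_star_edge /ds_adj /=; lia.
- move=> u v; rewrite /double_star_edge /ds_adj -!val_eqE !inE /=.
  move: (ltn_ord u) (ltn_ord v); lia.
- by rewrite card_Iset; lia.
- by rewrite card_Iset; lia.
- by rewrite card_Iset; lia.
Qed.

Theorem mainTheorem14 (a b : nat) :
  1 <= a -> 1 <= b -> (a + 4 < b) || (b + 4 < a) ->
  let n := a + b + 2 in
  C3_diam_gt (double_star_edge a b) ((3 * n) %/ 2).
Proof.
move=> ha hb /orP[h|h] n; [exact: case2 | exact: case1].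
Qed.
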